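(* For every integer $n\ge0$ and all real $x,y$, $$\sum_{m=0}^{\lfloor n/2\rfloor}\binom{n}{2m}E_{n-2m}(x)(-1)^m y^{2m}=\sum_{k=0}^{n}\sum_{l=0}^{k}\sum_{m=0}^{\lfloor l/2\rfloor}S_2(n,k)\,\lambda^{n+l-k-2m}\binom{k}{l}E_{k-l,\lambda}(x)(-1)^m y^{2m}S_1(l,2m).$$
   Context: Let $\lambda$ be a nonzero real number; generating functions are formal power series in $t$. $e_\lambda^{x}(t)=(1+\lambda t)^{x/\lambda}$. The type 2 degenerate Euler polynomials are defined by $\frac{2}{e_\lambda^{1/2}(t)+e_\lambda^{-1/2}(t)}e_\lambda^{x}(t)=\sum_{n\ge0}E_{n,\lambda}(x)\frac{t^n}{n!}$. The (non-degenerate) type 2 Euler polynomials are defined by $\frac{2}{e^{t/2}+e^{-t/2}}e^{xt}=\sum_{n\ge0}E_n(x)\frac{t^n}{n!}$. $S_1(n,k)$ are the signed Stirling numbers of the first kind, $\frac{1}{k!}(\log(1+t))^k=\sum_{n\ge k}S_1(n,k)\frac{t^n}{n!}$, and $S_2(n,k)$ are the Stirling numbers of the second kind, $\frac{1}{k!}(e^t-1)^k=\sum_{n\ge k}S_2(n,k)\frac{t^n}{n!}$. *)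

(* Defs.v *)
From HB Require Import structures.
From mathcomp Require Import all_boot all_order all_algebra.
Set Implicit Arguments. Unset Strict Implicit. Unset Printing Implicit Defensive.
Import Order.TTheory GRing.Theory Num.Theory.
Local Open Scope ring_scope.

Section FPS.
Variable R : fieldType.

Definition fps := nat -> R.

Definition fps_one : fps := fun n => if n == 0%N then 1 else 0.
Definition fps_const (c : R) : fps := fun n => if n == 0%N then c else 0.
Definition fps_add (f g : fps) : fps := fun n => f n + g n.
Definition fps_sub (f g : fps) : fps := fun n => f n - g n.
Definition fps_scale (c : R) (f : fps) : fps := fun n => c * f n.
Definition fps_mul (f g : fps) : fps :=
  fun n => \sum_(i < n.+1) f i * g (n - i)%N.

Fixpoint fps_pow (f : fps) (k : nat) : fps :=
  match k with 0 => fps_one | k'.+1 => fps_mul f (fps_pow f k') end.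

(* first n+1 coefficients of the multiplicative inverse (needs f 0 != 0) *)
Fixpoint fps_inv_seq (f : fps) (n : nat) : seq R :=
  match n with
  | 0 => [:: (f 0%N)^-1]
  | n'.+1 => let s := fps_inv_seq f n' in
      rcons s (- (f 0%N)^-1 * \sum_(i < n'.+1) f i.+1 * nth 0 s (n' - i)%N)
  end.
Definition fps_inv (f : fps) : fps := fun n => nth 0 (fps_inv_seq f n) n.

Definition fps_exp (a : R) : fps := fun n => a ^+ n / (n`!)%:R.

(* e_lambda^x(t) = (1 + lambda t)^{x/lambda} = sum_n binom(x/lambda, n) (lambda t)^n *)
Definition fps_degexp (lam x : R) : fps :=
  fun n => (\prod_(i < n) (x / lam - i%:R)) / (n`!)%:R * lam ^+ n.

Definition fps_log1p : fps :=
  fun n => if n == 0%N then 0 else (-1) ^+ n.-1 / n%:R.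

End FPS.

(* signed Stirling numbers of the first kind: (log(1+t))^k/k! = sum S1(n,k) t^n/n! *)
Definition S1 {R : fieldType} (n k : nat) : R :=
  (n`!)%:R * (fps_pow (@fps_log1p R) k n / (k`!)%:R).

(* Stirling numbers of the second kind: (e^t-1)^k/k! = sum S2(n,k) t^n/n! *)
Definition S2 {R : fieldType} (n k : nat) : R :=
  (n`!)%:R * (fps_pow (fps_sub (fps_exp 1) (@fps_one R)) k n / (k`!)%:R).

(* type 2 Euler polynomials: 2/(e^{t/2}+e^{-t/2}) e^{xt} = sum E_n(x) t^n/n! *)
Definition Euler2 {R : fieldType} (n : nat) (x : R) : R :=
  (n`!)%:R *
  fps_mul (fps_scale 2 (fps_inv (fps_add (fps_exp (2^-1)) (fps_exp (- 2^-1)))))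
          (fps_exp x) n.

(* type 2 degenerate Euler polynomials:
   2/(e_lam^{1/2}(t)+e_lam^{-1/2}(t)) e_lam^x(t) = sum E_{n,lam}(x) t^n/n! *)
Definition DegEuler2 {R : fieldType} (lam : R) (n : nat) (x : R) : R :=
  (n`!)%:R *
  fps_mul (fps_scale 2 (fps_inv (fps_add (fps_degexp lam (2^-1))
                                         (fps_degexp lam (- 2^-1)))))
          (fps_degexp lam x) n.

(* Main.v *)
Require Import Defs.
From HB Require Import structures.
From mathcomp Require Import all_boot all_order all_algebra.
From mathcomp Require Import zify ring lra.
Import Order.TTheory GRing.Theory Num.Theory.
Local Open Scope ring_scope.
Set Implicit Arguments. Unset Strict Implicit. Unset Printing Implicit Defensive.

Section Aux.
Variable R : numFieldType.
Implicit Types p q : {poly R}.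

Definition eqc (N : nat) p q := forall i, (i < N)%N -> p`_i = q`_i.
Definition tr (N : nat) (f : fps R) : {poly R} := \poly_(i < N) f i.

Lemma eqc_refl N p : eqc N p p. Proof. by []. Qed.
Lemma eqc_sym N p q : eqc N p q -> eqc N q p. Proof. by move=> h i /h. Qed.
Lemma eqc_trans N p q r : eqc N p q -> eqc N q r -> eqc N p r.
Proof. by move=> h1 h2 i hi; rewrite h1 // h2. Qed.
Lemma eqc_add N p p' q q' : eqc N p p' -> eqc N q q' -> eqc N (p + q) (p' + q').
Proof. by move=> h1 h2 i hi; rewrite !coefD h1 // h2. Qed.
Lemma eqc_scale N c p p' : eqc N p p' -> eqc N (c *: p) (c *: p').
Proof. by move=> h i hi; rewrite !coefZ h. Qed.
Lemma eqc_mul N p p' q q' : eqc N p p' -> eqc N q q' -> eqc N (p * q) (p' * q').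
Proof.
move=> h1 h2 i hi; rewrite !coefM; apply: eq_bigr => j _.
have hj : (j < N)%N by apply: leq_ltn_trans hi; rewrite -ltnS.
rewrite h1 // h2 //; apply: leq_ltn_trans hi; exact: leq_subr.
Qed.
Lemma eqc_pow N p p' k : eqc N p p' -> eqc N (p ^+ k) (p' ^+ k).
Proof.
move=> h; elim: k => [|k IH]; first exact: eqc_refl.
by rewrite !exprS; apply: eqc_mul.
Qed.

Lemma coef_tr N f i : (i < N)%N -> (tr N f)`_i = f i.
Proof. by move=> hi; rewrite coef_poly hi. Qed.

Lemma tr_mul N f g : eqc N (tr N (fps_mul f g)) (tr N f * tr N g).
Proof.
move=> i hi; rewrite coef_tr // coefM /fps_mul; apply: eq_bigr => j _.
have hj : (j < N)%N by apply: leq_ltn_trans hi; rewrite -ltnS.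
rewrite !coef_tr //; apply: leq_ltn_trans hi; exact: leq_subr.
Qed.

Lemma tr_one N : eqc N (tr N (fps_one R)) 1.
Proof. by move=> i hi; rewrite coef_tr // coef1 /fps_one; case: (i == 0%N). Qed.

Lemma tr_pow N f k : eqc N (tr N (fps_pow f k)) ((tr N f) ^+ k).
Proof.
elim: k => [|k IH] /=; first exact: tr_one.
apply: eqc_trans; first exact: tr_mul.
by rewrite exprS; apply: eqc_mul.
Qed.

Lemma tr_add N f g : tr N (fps_add f g) = tr N f + tr N g.
Proof. by apply/polyP => i; rewrite coefD !coef_poly; case: ifP; rewrite ?addr0. Qed.

Lemma tr_scale N c f : tr N (fps_scale c f) = c *: tr N f.
Proof. by apply/polyP => i; rewrite coefZ !coef_poly; case: ifP; rewrite ?mulr0. Qed.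

Lemma pow_low q k i : q`_0 = 0 -> (i < k)%N -> (q ^+ k)`_i = 0.
Proof.
move=> q0; elim: k i => [//|k IH] i hi.
rewrite exprS coefM big1 // => j _.
case: (posnP j) => [->|jp]; first by rewrite q0 mul0r.
rewrite IH ?mulr0 //.
move: hi; rewrite ltnS => hi.
have := ltn_ord j.
lia.
Qed.

Lemma sum_widen a b (F : nat -> R) : (a <= b)%N ->
  (forall k, (a <= k)%N -> (k < b)%N -> F k = 0) ->
  \sum_(k < a) F k = \sum_(k < b) F k.
Proof.
move=> hab hF; rewrite (big_ord_widen _ _ hab) big_mkcond /=.
apply: eq_bigr => k _; case: ifP => // /negbT; rewrite -leqNgt => h.
by rewrite hF.
Qed.

Lemma coef_comp_trunc p q i : q`_0 = 0 ->
  (p \Po q)`_i = \sum_(k < i.+1) p`_k * (q ^+ k)`_i.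
Proof.
move=> q0; rewrite coef_comp_poly.
rewrite (@sum_widen (size p) (size p + i.+1) (fun k => p`_k * (q ^+ k)`_i)) ?leq_addr //; last first.
  by move=> k hk _; rewrite nth_default ?mul0r.
rewrite [RHS](@sum_widen i.+1 (size p + i.+1) (fun k => p`_k * (q ^+ k)`_i)) ?leq_addl //.
by move=> k hk _; rewrite pow_low ?mulr0.
Qed.

Lemma eqc_comp_l N p p' q : q`_0 = 0 -> eqc N p p' -> eqc N (p \Po q) (p' \Po q).
Proof.
move=> q0 h i hi; rewrite !coef_comp_trunc //; apply: eq_bigr => k _.
rewrite h //; apply: leq_ltn_trans hi; rewrite -ltnS; exact: ltn_ord.
Qed.

Lemma eqc_comp_r N p q q' : q`_0 = 0 -> q'`_0 = 0 -> eqc N q q' ->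
  eqc N (p \Po q) (p \Po q').
Proof.
move=> q0 q'0 h i hi; rewrite !coef_comp_trunc //; apply: eq_bigr => k _.
by rewrite (eqc_pow k h).
Qed.

Lemma deriv_eqc N p q : eqc N p^`() q^`() -> p`_0 = q`_0 -> eqc N.+1 p q.
Proof.
move=> h h0 [|i] hi //; have := h i hi; rewrite !coef_deriv => e.
have ne : (i.+1)%:R != 0 :> R by rewrite pnatr_eq0.
by apply: (mulIf ne); rewrite !mulr_natr e.
Qed.

Lemma fact_neq0 k : (k`!)%:R != 0 :> R.
Proof. by rewrite pnatr_eq0 -lt0n fact_gt0. Qed.
Lemma natS_neq0 k : 1 + k%:R != 0 :> R.
Proof. by rewrite addrC natr1 pnatr_eq0. Qed.
Lemma natSS_neq0 k : 1 + (1 + k%:R) != 0 :> R.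
Proof. by rewrite (addrC 1 k%:R) natr1 addrC natr1 pnatr_eq0. Qed.

Lemma nat2_neq0 k : 2 + k%:R != 0 :> R.
Proof. by rewrite -natrD pnatr_eq0. Qed.

Lemma ode N (a : R) h : (forall i, (i < N)%N -> h^`()`_i = a * h`_i) ->
  h`_0 = 1 -> forall i, (i < N.+1)%N -> h`_i = a ^+ i / (i`!)%:R.
Proof.
move=> hd h0; elim=> [|i IH] hi; first by rewrite h0 fact0 expr0 divr1.
have := hd i hi; rewrite coef_deriv IH ?(ltnW hi) // => e.
have ne : (i.+1)%:R != 0 :> R by rewrite pnatr_eq0.
have nf : (i`!)%:R != 0 :> R by rewrite pnatr_eq0 -lt0n fact_gt0.
apply: (mulIf ne); rewrite mulr_natr e factS natrM exprS.
field. by rewrite nf addrC natr1 ne.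
Qed.

Lemma size_inv_seq (f : fps R) n : size (fps_inv_seq f n) = n.+1.
Proof. by elim: n => [|n IH] //=; rewrite size_rcons IH. Qed.

Lemma nth_inv_seq (f : fps R) m i : (i <= m)%N ->
  nth 0 (fps_inv_seq f m) i = fps_inv f i.
Proof.
elim: m => [|m IH]; first by rewrite leqn0 => /eqP ->.
rewrite leq_eqVlt => /orP [/eqP -> //| hi].
by rewrite /= nth_rcons size_inv_seq hi IH.
Qed.

Lemma fps_invS (f : fps R) n : fps_inv f n.+1 =
  - (f 0%N)^-1 * \sum_(i < n.+1) f i.+1 * fps_inv f (n - i)%N.
Proof.
rewrite {1}/fps_inv /= nth_rcons size_inv_seq ltnn eqxx; congr (_ * _).
by apply: eq_bigr => i _; rewrite nth_inv_seq // leq_subr.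
Qed.

Lemma fps_mul_inv (f : fps R) n : f 0%N != 0 -> fps_mul f (fps_inv f) n = fps_one R n.
Proof.
move=> f0; case: n => [|n].
  by rewrite /fps_mul big_ord1 /fps_inv /= mulfV.
rewrite /fps_mul big_ord_recl subn0 fps_invS /fps_one /=.
rewrite [X in _ + X](eq_bigr (fun i : 'I_n.+1 => f i.+1 * fps_inv f (n - i)%N)); last first.
  by move=> i _; rewrite /bump leq0n add1n subSS.
by rewrite mulrA mulrN mulfV // mulN1r addNr.
Qed.

Lemma inv_unique N p p' q q' : eqc N (p * q) 1 -> eqc N (p' * q') 1 ->
  eqc N q q' -> eqc N p p'.
Proof.
move=> h1 h2 hq.
have e1 : eqc N p (p * (q' * p')).
  by rewrite -[X in eqc _ X _]mulr1; apply: eqc_mul => //; apply: eqc_sym; rewrite mulrC.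
apply: eqc_trans e1 _.
have e2 : eqc N (p * (q' * p')) ((p * q) * p').
  by rewrite mulrA; apply: eqc_mul => //; apply: eqc_mul => //; apply: eqc_sym.
apply: eqc_trans e2 _; rewrite -[X in eqc _ _ X]mul1r; apply: eqc_mul => //.
Qed.

Lemma pow_ss (c : R) (f : fps R) k n : c != 0 ->
  fps_pow (fun i => c^-1 * (c ^+ i * f i)) k n = c^-1 ^+ k * (c ^+ n * fps_pow f k n).
Proof.
move=> c0; elim: k n => [|k IH] n /=.
  by rewrite /fps_one; case: n => [|n] /=; rewrite ?expr0 ?mul1r ?mulr0.
rewrite /fps_mul mulr_sumr mulr_sumr; apply: eq_bigr => i _.
rewrite IH.
have hi : (i <= n)%N by rewrite -ltnS.
have e : c ^+ n = c ^+ i * c ^+ (n - i) by rewrite -exprD subnKC.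
rewrite e exprS; ring.
Qed.

End Aux.

Section Comp.
Variable R : numFieldType.
Variable lam : R.
Variable n : nat.
Definition Pe : fps R := fps_sub (fps_exp 1) (fps_one R).
Definition uf : fps R := fun i => lam^-1 * (lam ^+ i * Pe i).
Definition Lf : fps R := fun i => lam^-1 * (lam ^+ i * fps_log1p R i).
Definition Up := tr n.+1 uf.
Definition Lp := tr n.+1 Lf.

Lemma Up0 : Up`_0 = 0.
Proof. rewrite coef_tr // /uf /Pe /fps_sub /fps_exp /fps_one /= !expr0 fact0 mulr1n divr1; ring. Qed.

Lemma Lp0 : Lp`_0 = 0.
Proof. by rewrite coef_tr // /Lf /fps_log1p /= !mulr0. Qed.

Lemma dU : lam != 0 -> eqc n Up^`() (1 + lam *: Up).
Proof.
move=> hl i hi; have h1 : (i < n.+1)%N by exact: ltnW.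
rewrite coef_deriv coefD coefZ coef1 !coef_tr //.
rewrite /uf /Pe /fps_sub /fps_exp /fps_one /= !expr1n.
case: i hi h1 => [|j] hi h1 /=.
  rewrite !expr0 expr1 !fact0 /= factS fact0 /=; field; exact: hl.
rewrite -mulr_natr !factS !natrM !exprS.
field. by rewrite fact_neq0 natS_neq0 hl nat2_neq0.
Qed.

Lemma comp_trick G : lam != 0 ->
  eqc n ((G \Po Up) * Up^`()) ((G * (1 + lam *: 'X)) \Po Up).
Proof.
move=> hl; have e1 : (1 : {poly R}) \Po Up = 1 by rewrite -polyC1 comp_polyC.
rewrite comp_polyM comp_polyD comp_polyZ comp_polyX e1.
apply: eqc_mul; first exact: eqc_refl.
exact: dU.
Qed.

Lemma degexpS (a : R) j : lam != 0 -> fps_degexp lam a j.+1 =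
  fps_degexp lam a j * (a / lam - j%:R) * lam / (j.+1)%:R.
Proof.
move=> hl; rewrite /fps_degexp -!(big_mkord xpredT (fun i => a / lam - i%:R)).
rewrite big_nat_recr //= factS natrM exprS.
field. by rewrite fact_neq0 hl natS_neq0.
Qed.

Lemma KD (a : R) : lam != 0 ->
  eqc n ((tr n.+1 (fps_degexp lam a))^`() * (1 + lam *: 'X)) (a *: tr n.+1 (fps_degexp lam a)).
Proof.
move=> hl i hi; have h1 : (i < n.+1)%N by exact: ltnW.
rewrite mulrDr mulr1 -scalerAr coefD coefZ coefMX coefZ !coef_deriv.
case: i hi h1 => [|j] hi h1 /=.
  rewrite !coef_tr // /fps_degexp big_ord1 big_ord0 /= expr1 expr0.
  rewrite mulr1n subr0 mulr0 addr0 (factS 0) !fact0 /= muln1; field; exact: hl.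
rewrite !coef_tr ?(ltnW hi) //.
rewrite (degexpS a j.+1) //; set D := fps_degexp lam a j.+1.
rewrite -[X in X + _]mulr_natr -[D *+ _]mulr_natr.
field. by rewrite hl nat2_neq0.
Qed.

Lemma deg_comp (a : R) : lam != 0 ->
  eqc n.+1 (tr n.+1 (fps_degexp lam a) \Po Up) (tr n.+1 (fps_exp a)).
Proof.
move=> hl; set F := tr n.+1 (fps_degexp lam a).
have h0 : (F \Po Up)`_0 = 1.
  rewrite coef_comp_trunc ?Up0 // big_ord1 expr0 coef1 mulr1 coef_tr //.
  by rewrite /fps_degexp big_ord0 fact0 expr0 divr1 mulr1.
have hd : forall i, (i < n)%N -> (F \Po Up)^`()`_i = a * (F \Po Up)`_i.
  move=> i hi; rewrite deriv_comp (comp_trick _ hl hi).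
  by rewrite (eqc_comp_l Up0 (KD a hl) hi) comp_polyZ coefZ.
move=> i hi; rewrite coef_tr // /fps_exp; exact: ode hd h0 i hi.
Qed.

Lemma LfS k : lam != 0 -> Lf k.+1 *+ k.+1 = lam ^+ k * (-1) ^+ k.
Proof.
move=> hl; rewrite /Lf /fps_log1p /= -mulr_natr exprS.
field. by rewrite hl natS_neq0.
Qed.

Lemma KL : lam != 0 -> eqc n (Lp^`() * (1 + lam *: 'X)) 1.
Proof.
move=> hl i hi; have h1 : (i < n.+1)%N by exact: ltnW.
rewrite mulrDr mulr1 -scalerAr coefD coefZ coefMX !coef_deriv coef1.
case: i hi h1 => [|j] hi h1 /=.
  by rewrite mulr0 addr0 coef_tr // LfS // !expr0 mulr1.
rewrite !coef_tr ?(ltnW hi) // !LfS // !exprS; ring.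
Qed.

Lemma log_comp : lam != 0 -> eqc n.+1 (Lp \Po Up) 'X.
Proof.
move=> hl; apply: deriv_eqc; last first.
  by rewrite coef_comp_trunc ?Up0 // big_ord1 Lp0 mul0r coefX.
move=> i hi; rewrite deriv_comp (comp_trick _ hl hi) (eqc_comp_l Up0 (KL hl) hi).
by rewrite derivX -polyC1 comp_polyC.
Qed.
End Comp.

Section T.
Variable R : numFieldType.

Lemma term_rhs (lam y g P Q : R) n k l m : lam != 0 -> (k <= n)%N -> (l <= k)%N -> (2 * m <= l)%N ->
  (n`!%:R * (P / k`!%:R)) * lam ^+ (n + l - k - 2 * m) * ('C(k, l))%:R * ((k - l)`!%:R * g)
    * (-1) ^+ m * y ^+ (2 * m) * (l`!%:R * (Q / (2 * m)`!%:R))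
  = n`!%:R * ((g * ((-1) ^+ m * y ^+ (2 * m) / (2 * m)`!%:R
        * (lam^-1 ^+ (2 * m) * (lam ^+ l * Q)))) * (lam^-1 ^+ k * (lam ^+ n * P))).
Proof.
move=> hl hkn hlk hml.
have hk : lam ^+ k != 0 by rewrite expf_neq0.
have hm : lam ^+ (2 * m) != 0 by rewrite expf_neq0.
have he : lam ^+ (n + l - k - 2 * m) = lam ^+ n * lam ^+ l / (lam ^+ k * lam ^+ (2 * m)).
  apply: (mulIf (mulf_neq0 hk hm)); rewrite mulfVK ?mulf_neq0 // -!exprD.
  congr (_ ^+ _); lia.
have hb : ('C(k, l))%:R = k`!%:R / (l`!%:R * (k - l)`!%:R) :> R.
  apply: (mulIf (mulf_neq0 (fact_neq0 R l) (fact_neq0 R (k - l)))).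
  by rewrite mulfVK ?mulf_neq0 ?fact_neq0 // -!natrM bin_fact.
rewrite he hb !exprVn.
field. by rewrite !fact_neq0 hk hm.
Qed.

Lemma term_lhs (g y : R) n m : (2 * m <= n)%N ->
  ('C(n, 2 * m))%:R * ((n - 2 * m)`!%:R * g) * (-1) ^+ m * y ^+ (2 * m)
  = n`!%:R * ((-1) ^+ m * y ^+ (2 * m) / (2 * m)`!%:R * g).
Proof.
move=> h; rewrite -(bin_fact h) !natrM.
field. by rewrite !fact_neq0.
Qed.
End T.


Theorem mainTheorem13 (R : realFieldType) (lam : R) (hlam : lam != 0)
  (n : nat) (x y : R) :
  \sum_(m < n./2.+1)
      ('C(n, 2 * m))%:R * Euler2 (n - 2 * m)%N x * (-1) ^+ m * y ^+ (2 * m)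
  = \sum_(k < n.+1) \sum_(l < k.+1) \sum_(m < l./2.+1)
      S2 n k * lam ^+ (n + l - k - 2 * m)%N * ('C(k, l))%:R
      * DegEuler2 lam (k - l)%N x * (-1) ^+ m * y ^+ (2 * m) * S1 l (2 * m).
Proof.
pose E := fps_add (fps_exp (2^-1)) (fps_exp (- 2^-1) : fps R).
pose Gf := fps_mul (fps_scale 2 (fps_inv E)) (fps_exp x).
pose Dl := fps_add (fps_degexp lam (2^-1)) (fps_degexp lam (- 2^-1)).
pose Glf := fps_mul (fps_scale 2 (fps_inv Dl)) (fps_degexp lam x).
pose cm := fun m : nat => (-1) ^+ m * y ^+ (2 * m) / ((2 * m)`!)%:R : R.
pose cosP := \sum_(m < n./2.+1) cm m *: 'X^(2 * m) : {poly R}.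
pose Cp := \sum_(m < n./2.+1) cm m *: (Lp lam n) ^+ (2 * m).
have h2 : (1 + 1 : R) != 0 by rewrite gt_eqF //; lra.
have hE0 : E 0%N != 0.
  by rewrite /E /fps_add /fps_exp !expr0 fact0 divr1.
have hD0 : Dl 0%N != 0.
  by rewrite /Dl /fps_add /fps_degexp !big_ord0 fact0 !expr0 divr1 !mulr1.
have hinv : forall f : fps R, f 0%N != 0 -> eqc n.+1 (tr n.+1 (fps_inv f) * tr n.+1 f) 1.
  move=> f hf; rewrite mulrC.
  apply: (@eqc_trans _ n.+1 _ (tr n.+1 (fps_mul f (fps_inv f)))); first exact/eqc_sym/tr_mul.
  have -> : tr n.+1 (fps_mul f (fps_inv f)) = tr n.+1 (fps_one R).
    by apply/polyP => i; rewrite !coef_poly fps_mul_inv.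
  exact: tr_one.
have eG : eqc n.+1 (tr n.+1 Glf \Po Up lam n) (tr n.+1 Gf).
  have e1 : eqc n.+1 (tr n.+1 Glf) ((2 *: tr n.+1 (fps_inv Dl)) * tr n.+1 (fps_degexp lam x)).
    by rewrite -tr_scale; exact: tr_mul.
  have e2 : eqc n.+1 (tr n.+1 Gf) ((2 *: tr n.+1 (fps_inv E)) * tr n.+1 (fps_exp x)).
    by rewrite -tr_scale; exact: tr_mul.
  apply: (eqc_trans (eqc_comp_l (Up0 lam n) e1)); apply: (eqc_trans _ (eqc_sym e2)).
  rewrite -!scalerAl (@comp_polyZ R) comp_polyM; apply: eqc_scale; apply: eqc_mul; last exact: deg_comp.
  apply: (inv_unique (q := tr n.+1 Dl \Po Up lam n) (q' := tr n.+1 E)); last 1 first.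
  - by rewrite /Dl /E !tr_add comp_polyD; apply: eqc_add; exact: deg_comp.
  - rewrite -comp_polyM; apply: eqc_trans (eqc_comp_l (Up0 lam n) (hinv _ hD0)) _.
    by rewrite -polyC1 comp_polyC.
  - exact: hinv.
have eC : eqc n.+1 (Cp \Po Up lam n) cosP.
  have hC : Cp = cosP \Po Lp lam n.
    rewrite /Cp /cosP raddf_sum; apply: eq_bigr => m _.
    by rewrite -[RHS]/((cm m *: 'X^(2 * m)) \Po Lp lam n) (@comp_polyZ R) comp_Xn_poly.
  have hL0 : (Lp lam n \Po Up lam n)`_0 = 0 by rewrite (log_comp hlam) // coefX.
  rewrite hC -comp_polyA; apply: eqc_trans (eqc_comp_r _ hL0 _ (log_comp hlam)) _.
  - by rewrite coefX.
  - by rewrite comp_polyXr; exact: eqc_refl.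
have key : eqc n.+1 ((tr n.+1 Glf * Cp) \Po Up lam n) (tr n.+1 Gf * cosP).
  by rewrite comp_polyM; apply: eqc_mul.
have hL : \sum_(m < n./2.+1)
      ('C(n, 2 * m))%:R * Euler2 (n - 2 * m)%N x * (-1) ^+ m * y ^+ (2 * m)
    = n`!%:R * (tr n.+1 Gf * cosP)`_n.
  rewrite /cosP mulr_sumr coef_sum mulr_sumr; apply: eq_bigr => m _.
  have hm : (2 * m <= n)%N.
    by have := ltn_ord m; rewrite ltnS geq_half_double -mul2n.
  rewrite -scalerAr coefZ coefMXn ltnNge hm /= coef_tr; last by rewrite ltnS leq_subr.
  rewrite /Euler2 term_lhs //.
have hR : \sum_(k < n.+1) \sum_(l < k.+1) \sum_(m < l./2.+1)
      S2 n k * lam ^+ (n + l - k - 2 * m)%N * ('C(k, l))%:R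
      * DegEuler2 lam (k - l)%N x * (-1) ^+ m * y ^+ (2 * m) * S1 l (2 * m)
    = n`!%:R * ((tr n.+1 Glf * Cp) \Po Up lam n)`_n.
  rewrite coef_comp_trunc ?Up0 // mulr_sumr; apply: eq_bigr => k _.
  have hk : (k <= n)%N by rewrite -ltnS.
  rewrite coefMr mulr_suml mulr_sumr; apply: eq_bigr => l _.
  have hl : (l <= k)%N by rewrite -ltnS.
  rewrite coef_tr; last by rewrite ltnS (leq_trans (leq_subr _ _) hk).
  rewrite /Cp coef_sum mulr_sumr mulr_suml mulr_sumr.
  have hlow : forall (f : fps R) (a b : nat), f 0%N = 0 -> (a < b)%N -> fps_pow f b a = 0.
    move=> f a b f0 hab; rewrite -(coef_tr (fps_pow f b) (ltnSn a)) (@tr_pow _ a.+1 f b a (ltnSn a)).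
    by apply: pow_low => //; rewrite coef_tr.
  have hpow : forall (f : fps R) j i, (i < n.+1)%N -> ((tr n.+1 f) ^+ j)`_i = fps_pow f j i.
    by move=> f j i hi; rewrite -(@tr_pow _ n.+1 f j i hi) coef_tr.
  rewrite (@sum_widen _ (l./2.+1) (n./2.+1) (fun m => S2 n k * lam ^+ (n + l - k - 2 * m)%N * ('C(k, l))%:R
      * DegEuler2 lam (k - l)%N x * (-1) ^+ m * y ^+ (2 * m) * S1 l (2 * m))).
  cbv beta. apply: eq_bigr => m _.
    case: (leqP (2 * m) l) => hml.
      rewrite coefZ /Lp /Up !hpow ?(leq_ltn_trans hml) ?(leq_ltn_trans hl) ?ltnS //.
      rewrite /uf /Lf !pow_ss //.
      exact: term_rhs.
    rewrite coefZ pow_low ?Lp0 // /S1 hlow //.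
      by rewrite !(mul0r, mulr0).
  - by rewrite ltnS half_leq // (leq_trans hl hk).
  - move=> m hm _; rewrite /S1 hlow ?mul0r ?mulr0 //.
    by rewrite mul2n -ltn_half_double.
rewrite hL hR; congr (_ * _); exact: (esym (key n (ltnSn n))).
Qed.
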